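(* Let $\Gamma$ be a finite alphabet and $D,\ell$ positive integers. Let $H:\Gamma^2\to\{0,1\}$ be distributed as a $(D,\ell)$-iterated pair-wise independent function. Then for any $ab\in\Gamma^2$, $\frac{1}{2D}\le\Pr_H[H(ab)=0]\le\frac{1}{D}$. Furthermore, for any $S\subseteq\Gamma^2$ with $|S|=\ell D$, $\Pr_H[\forall ab\in S,\ H(ab)\ne 0]\le 1/2^{\ell}$.
   Context: A family $\mathcal{H}$ of functions $h:U\to V$ is pair-wise independent if for all $u\ne u'$ in $U$ and $v,v'\in V$, $\Pr_h[h(u)=v\wedge h(u')=v']=1/|V|^2$ for $h$ uniform in $\mathcal{H}$. $H:\Gamma^2\to\{0,1\}$ is a $(D,\ell)$-iterated pair-wise independent function if it is obtained by selecting independently at random functions $h_1,\dots,h_\ell:\Gamma^2\to\{0,\dots,\ell D-1\}$, each from a pair-wise independent hash system, and setting $H(ab)=0$ if $\prod_{i=1}^{\ell}h_i(ab)=0$ and $H(ab)=1$ otherwise. *)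

(* Defs.v *)
From mathcomp Require Import all_boot all_order all_algebra.
Set Implicit Arguments. Unset Strict Implicit. Unset Printing Implicit Defensive.
Import Order.TTheory GRing.Theory Num.Theory.
Local Open Scope ring_scope.

Definition uprob (T : finType) (E : pred T) : rat := #|E|%:R / #|T|%:R.

(* A hash system: a finite (nonempty) index type K, each k : K naming a function
   fam k : U -> 'I_m; h uniform in the system means k uniform in K. *)
Definition pairwise_indep (U K : finType) (m : nat) (fam : K -> U -> 'I_m) : Prop :=
  (0 < #|K|)%N /\
  forall u u' : U, u != u' -> forall v v' : 'I_m,
    uprob (fun k : K => (fam k u == v) && (fam k u' == v')) = 1 / (m ^ 2)%:R.

(* The (D,l)-iterated function determined by the independent choices
   h_1, ..., h_l  (i.e. f : {ffun 'I_l -> K}, f i indexing h_(i+1)):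
   H(ab) = 0 if prod_i h_i(ab) = 0, and 1 otherwise. *)
Definition iterH (G K : finType) (D l : nat) (fam : K -> G * G -> 'I_(l * D))
    (f : {ffun 'I_l -> K}) (ab : G * G) : nat :=
  if (\prod_(i < l) (fam (f i) ab : nat))%N == 0%N then 0%N else 1%N.

(* Main.v *)
Require Import Defs.
From mathcomp Require Import all_boot all_order all_algebra.
From mathcomp Require Import ring lra zify.
Import Order.TTheory GRing.Theory Num.Theory.
Set Implicit Arguments. Unset Strict Implicit. Unset Printing Implicit Defensive.
Local Open Scope ring_scope.

Lemma card_ind (T : finType) (P : pred T) :
  (#|P|%:R : rat) = \sum_(k : T) (P k : nat)%:R.
Proof.
rewrite -sum1_card natr_sum big_mkcond /=; apply: eq_bigr => k _.
by rewrite [k \in P]unfold_in; case: (P k).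
Qed.

Lemma ind_split (m : nat) (b : bool) (x : 'I_m) :
  ((b : nat)%:R : rat) = \sum_(v : 'I_m) ((b && (x == v)) : nat)%:R.
Proof.
rewrite (bigD1 x) //= eqxx andbT big1 ?addr0 // => v neq.
by rewrite eq_sym (negbTE neq) andbF.
Qed.

Lemma pi_pair (U K : finType) (m : nat) (fam : K -> U -> 'I_m) :
  pairwise_indep fam -> forall u u', u != u' -> forall v v',
  (#|[pred k | (fam k u == v) && (fam k u' == v')]|%:R : rat)
     = #|K|%:R / (m ^ 2)%:R.
Proof.
move=> [NK H] u u' nu v v'; have := H u u' nu v v'.
rewrite /uprob => E.
have NK0 : (#|K|%:R : rat) != 0 by rewrite pnatr_eq0 -lt0n.
have m0 : (0 < m)%N by apply: leq_ltn_trans (leq0n v) (ltn_ord v).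
have m20 : ((m ^ 2)%:R : rat) != 0 by rewrite pnatr_eq0 -lt0n expn_gt0 m0.
move: E; set c := #|_|%:R => E.
have -> : c = (c / #|K|%:R) * #|K|%:R by rewrite mulfVK.
by rewrite E mul1r mulrC.
Qed.

Lemma pi_single (U K : finType) (m : nat) (fam : K -> U -> 'I_m) :
  pairwise_indep fam -> forall u u', u != u' -> forall v,
  (#|[pred k | fam k u == v]|%:R : rat) = #|K|%:R / m%:R.
Proof.
move=> pi u u' nu v.
have m0 : (0 < m)%N by apply: leq_ltn_trans (leq0n v) (ltn_ord v).
rewrite card_ind.
under eq_bigr => k _ do rewrite (ind_split (fam k u == v) (fam k u')).
rewrite exchange_big /=.
under eq_bigr => v' _ do rewrite -(card_ind [pred k | (fam k u == v) && (fam k u' == v')]) (pi_pair pi nu).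
rewrite sumr_const card_ord.
have m1 : (m%:R : rat) != 0 by rewrite pnatr_eq0 -lt0n.
rewrite -mulr_natr natrX; field; done.
Qed.

Lemma pointwise (n : nat) : (3 * n <= 2 * (n != 0%N) + n * n)%N.
Proof. case: n => [|n] //=; nia. Qed.

Lemma bonf (U K : finType) (m : nat) (fam : K -> U -> 'I_m) (v0 : 'I_m)
   (S : {set U}) :
 (forall u, (#|[pred k | fam k u == v0]|%:R : rat) = #|K|%:R / m%:R) ->
 (forall u u', u != u' ->
    (#|[pred k | (fam k u == v0) && (fam k u' == v0)]|%:R : rat)
      = #|K|%:R / (m^2)%:R) ->
 #|S| = m ->
 (#|[pred k | [forall u in S, fam k u != v0]]|%:R : rat) * 2 <= #|K|%:R.
Proof.
move=> H1 H2 Sm.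
have m0 : (0 < m)%N by apply: leq_ltn_trans (leq0n v0) (ltn_ord v0).
have m1 : (m%:R : rat) != 0 by rewrite pnatr_eq0 -lt0n.
set N : rat := #|K|%:R.
pose n k := (\sum_(u in S) (fam k u == v0 : nat))%N.
have A : \sum_(k : K) (n k)%:R = N.
  under eq_bigr => k _ do rewrite /n natr_sum.
  rewrite exchange_big /=.
  under eq_bigr => u _ do rewrite -(card_ind [pred k | fam k u == v0]) H1.
  rewrite sumr_const Sm -mulr_natr; field; done.
have B : \sum_(k : K) (n k)%:R * (n k)%:R <= 2 * N.
  under eq_bigr => k _ do rewrite /n natr_sum mulr_suml.
  rewrite exchange_big /=.
  have -> : 2 * N = \sum_(u in S) (2 * N / m%:R).
    rewrite sumr_const Sm -mulr_natr; field; done.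
  apply: ler_sum => u uS.
  under eq_bigr => k _ do rewrite mulr_sumr.
  rewrite exchange_big /=.
  rewrite (bigD1 u) //=.
  have E : forall w, \sum_(k : K) (fam k u == v0 : nat)%:R * (fam k w == v0 : nat)%:R
       = (#|[pred k | (fam k u == v0) && (fam k w == v0)]|%:R : rat).
    move=> w; rewrite card_ind; apply: eq_bigr => k _.
    by rewrite /=; case: (fam k u == v0); case: (fam k w == v0); rewrite /= ?mulr1 ?mulr0.
  rewrite E.
  under eq_bigr => w /andP[_ nw] do rewrite E H2 1?eq_sym //.
  rewrite (eq_card (B := [pred k | fam k u == v0])); last first.
    by move=> k; rewrite !inE andbb.
  rewrite H1 sumr_const.
  have : (#|[pred w in S | w != u]| <= m)%N.
    by rewrite -Sm; apply: subset_leq_card; apply/subsetP => w; rewrite !inE => /andP[].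
  rewrite -(ler_nat rat) => hc.
  have hp : 0 <= N / (m ^ 2)%:R by rewrite divr_ge0 // ler0n.
  rewrite -[_ *+ #|_|]mulr_natr ?mul1r -/N.
  apply: (@le_trans _ _ (N / m%:R + N / (m ^ 2)%:R * m%:R)).
    by rewrite lerD2l; apply: ler_wpM2l.
  rewrite natrX le_eqVlt; apply/orP; left; apply/eqP; field; done.
have C : \sum_(k : K) 3 * ((n k)%:R : rat) <= \sum_(k : K) (2 * ((n k != 0%N) : nat)%:R + (n k)%:R * (n k)%:R).
  apply: ler_sum => k _.
  have := pointwise (n k); rewrite -(ler_nat rat) natrD !natrM.
  by [].
rewrite -mulr_sumr big_split /= -mulr_sumr A in C.
have Z : \sum_(k : K) ((n k != 0%N) : nat)%:R = (#|[predC [pred k | [forall u in S, fam k u != v0]]]|%:R : rat).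
  rewrite card_ind; apply: eq_bigr => k _.
  rewrite /n !inE sum_nat_eq0.
  congr ((_ : nat)%:R); congr (~~ _); apply: eq_forallb => u.
  by case: (u \in S); case: (fam k u == v0).
rewrite Z in C.
have := cardC [pred k | [forall u in S, fam k u != v0]].
move/(congr1 (fun x : nat => (x%:R : rat))); rewrite natrD -/N => cc.
lra.
Qed.

Lemma bern (p : rat) (l : nat) : 0 <= p -> p <= 1 ->
  1 - l%:R * p <= (1 - p) ^+ l /\
  (1 - p) ^+ l <= 1 - l%:R * p + (l%:R * (l%:R - 1) / 2) * p ^+ 2.
Proof.
move=> p0 p1; elim: l => [|l [IH1 IH2]].
  rewrite expr0 !mul0r subr0 ?addr0; split; lra.
have l0 : 0 <= (l%:R : rat) by rewrite ler0n.
have q0 : 0 <= 1 - p by lra.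
have e1 : 0 <= (1 - p) ^+ l - (1 - l%:R * p) by rewrite subr_ge0.
have h1 := mulr_ge0 q0 e1.
have e2 : 0 <= (1 - l%:R * p + l%:R * (l%:R - 1) / 2 * p ^+ 2) - (1 - p) ^+ l by rewrite subr_ge0.
have h2 := mulr_ge0 q0 e2.
have h3 := mulr_ge0 l0 (mulr_ge0 p0 p0).
have h4 := mulr_ge0 (mulr_ge0 l0 (mulr_ge0 p0 p0)) p0.
have h5 : 0 <= (l%:R : rat) * (l%:R - 1) * p * p * p.
  case: l {IH1 IH2 e1 e2 h1 h2 h3 h4 l0} => [|l]; first by rewrite !mul0r.
  rewrite -natr1 addrK; do 4! (apply: mulr_ge0 => //); apply: addr_ge0 => //; by rewrite ler0n.
rewrite exprS -natr1; split; rewrite !expr2 in h2 *; nra.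
Qed.

Lemma iterH_ne0 (G K : finType) (D l : nat) (fam : K -> G * G -> 'I_(l * D))
  (v0 : 'I_(l * D)) (f : {ffun 'I_l -> K}) ab :
  val v0 = 0%N ->
  (iterH fam f ab != 0%N) = [forall i, fam (f i) ab != v0].
Proof.
move=> hv.
have E : (\prod_(i < l) (fam (f i) ab : nat) == 0)%N = [exists i, fam (f i) ab == v0].
  rewrite prod_nat_seq_eq0; apply/hasP/existsP => [[i _ /= h]|[i h]].
    by exists i; rewrite -val_eqE hv.
  by exists i; rewrite ?mem_index_enum //= -hv val_eqE.
rewrite /iterH; case: ifP => h.
  by rewrite eqxx /=; move: h; rewrite E => /existsP[i hi]; apply/esym/forallP => /(_ i); rewrite hi.
by move: h; rewrite E => /negbT; rewrite negb_exists => ->.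
Qed.

Theorem proposition6 (G : finType) (D l : nat) (K : finType)
    (fam : K -> G * G -> 'I_(l * D)) :
  (1 < #|G|)%N -> (0 < D)%N -> (0 < l)%N ->
  pairwise_indep fam ->
  (forall ab : G * G,
      1 / (2 * D)%:R <= uprob (fun f : {ffun 'I_l -> K} => iterH fam f ab == 0%N)
      /\ uprob (fun f : {ffun 'I_l -> K} => iterH fam f ab == 0%N) <= 1 / D%:R)
  /\
  (forall S : {set G * G}, #|S| = (l * D)%N ->
      uprob (fun f : {ffun 'I_l -> K} => [forall ab in S, iterH fam f ab != 0%N])
      <= 1 / (2 ^ l)%:R).
Proof.
move=> G1 D0 l0 pi.
have m0 : (0 < l * D)%N by rewrite muln_gt0 l0 D0.
pose v0 : 'I_(l * D) := Ordinal m0.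
have hv : val v0 = 0%N by [].
have NK : (0 < #|K|)%N by case: pi.
set N : rat := #|K|%:R.
have N0 : N != 0 by rewrite pnatr_eq0 -lt0n.
have m1 : ((l * D)%:R : rat) != 0 by rewrite pnatr_eq0 -lt0n.
have [x [y [_ _ xy]]] := card_gt1P G1.
have other : forall u : G * G, exists u', u != u'.
  move=> u; case: (eqVneq u (x, x)) => [->|h]; last by exists (x, x).
  by exists (y, y); apply/eqP => -[/eqP]; rewrite (negbTE xy).
have H1 : forall u, (#|[pred k | fam k u == v0]|%:R : rat) = N / (l * D)%:R.
  by move=> u; have [u' nu] := other u; apply: (pi_single pi nu).
have H2 := pi_pair pi.
have cardF : #|{ffun 'I_l -> K}| = (#|K| ^ l)%N by rewrite card_ffun card_ord.
split.
- move=> ab.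
  set P := [pred k | fam k ab == v0].
  have cP := cardC P.
  have cE := cardC (fun f : {ffun 'I_l -> K} => iterH fam f ab == 0%N).
  have eC : #|[predC (fun f : {ffun 'I_l -> K} => iterH fam f ab == 0%N)]| = #|(ffun_on [predC P] : {pred {ffun 'I_l -> K}})|.
    apply: eq_card => f; rewrite !inE (iterH_ne0 _ _ _ hv).
    apply/forallP/ffun_onP => h i; move: (h i); by rewrite !inE.
  rewrite eC card_ffun_on card_ord cardF in cE.
  have -> : uprob (fun f : {ffun 'I_l -> K} => iterH fam f ab == 0%N) = 1 - (1 - 1 / (l * D)%:R) ^+ l.
    rewrite /uprob cardF.
    move/(congr1 (fun n : nat => (n%:R : rat))): cE; rewrite natrD natrX => cE.
    move/(congr1 (fun n : nat => (n%:R : rat))): cP; rewrite natrD H1 -/N => cP.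
    have eP : (#|[predC P]|%:R : rat) = N * (1 - 1 / (l * D)%:R).
      apply: (@addrI _ (N / (l * D)%:R)); rewrite cP; by rewrite mulrBr mulr1 div1r addrC subrK.
    rewrite eP exprMn in cE; rewrite natrX -/N; have NX : N ^+ l != 0 by rewrite expf_neq0.
    apply: (mulIf NX); rewrite mulfVK //; move: cE; rewrite natrX -/N => cE.
    set a := #|_|%:R in cE *; set q := (1 - 1 / (l * D)%:R) ^+ l in cE *; set M := N ^+ l in cE *.
    have ea : a = M - M * q by lra.
    rewrite ea.
    ring.
  have p0 : 0 <= 1 / (l * D)%:R :> rat by rewrite divr_ge0 // ler0n.
  have p1 : 1 / (l * D)%:R <= 1 :> rat.
    rewrite ler_pdivrMr ?mul1r ?ler1n // ltr0n //.
  have [b1 b2] := bern l p0 p1.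
  have lR : (1 <= l%:R :> rat) by rewrite ler1n.
  have DR : (1 <= D%:R :> rat) by rewrite ler1n.
  rewrite natrM in b1 b2 *.
  rewrite (natrM _ 2 D).
  have lD0 : l%:R * D%:R != 0 :> rat by rewrite -natrM.
  have D00 : D%:R != 0 :> rat by rewrite pnatr_eq0 -lt0n.
  have l00 : l%:R != 0 :> rat by rewrite pnatr_eq0 -lt0n.
  have e1 : l%:R * (1 / (l%:R * D%:R)) = 1 / D%:R :> rat  by field; rewrite D00 l00.
  split; last by rewrite e1 in b1; lra.
  have e2 : l%:R * (1 / (l%:R * D%:R)) - l%:R * (l%:R - 1) / 2 * (1 / (l%:R * D%:R)) ^+ 2 - 1 / (2%:R * D%:R)
     = (l%:R * D%:R - l%:R + 1) / (2 * l%:R * D%:R ^+ 2) :> rat by field; rewrite ?D00 ?l00.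
  have e3 : 0 <= (l%:R * D%:R - l%:R + 1) / (2 * l%:R * D%:R ^+ 2) :> rat.
    apply: divr_ge0; last by nra.
    nra.
  lra.
- move=> S SE.
  set R := [pred k | [forall u in S, fam k u != v0]].
  have hR := bonf H1 (fun u u' nu => H2 u u' nu v0 v0) SE.
  rewrite /uprob cardF.
  have -> : #|(fun f : {ffun 'I_l -> K} => [forall ab in S, iterH fam f ab != 0%N])| = #|(ffun_on R : {pred {ffun 'I_l -> K}})|.
    apply: eq_card => f; rewrite !inE.
    apply/forallP/ffun_onP => h.
      move=> i; rewrite !inE; apply/forallP => u; apply/implyP => uS.
      by move: (h u); rewrite uS /= (iterH_ne0 _ _ _ hv) => /forallP.
    move=> u; apply/implyP => uS; rewrite (iterH_ne0 _ _ _ hv); apply/forallP => i.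
    by move: (h i); rewrite !inE => /forallP /(_ u) /implyP /(_ uS).
  rewrite card_ffun_on card_ord !natrX -/N -expr_div_n.
  have -> : (1 / 2 ^+ l : rat) = (1 / 2) ^+ l by rewrite expr_div_n expr1n.
  apply: lerXn2r; rewrite ?nnegrE ?divr_ge0 ?ler0n //.
  rewrite ler_pdivrMr ?ltr0n //; lra.
Qed.
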